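(* Let $A$ be a positive word in the band generators with $e\le A\le\delta$. Then $A$ has no decomposition $A=BaCbD$ with $B,C,D$ positive words (possibly empty), $a,b$ band generators, and $(a,b)$ an obstructing pair.
   Context: $B_n$ is the $n$-string braid group with band generators $a_{ts}=(\sigma_{t-1}\cdots\sigma_{s+1})\sigma_s(\sigma_{s+1}^{-1}\cdots\sigma_{t-1}^{-1})$, $n\ge t>s\ge1$; $e$ is the identity, and a positive word is a word in positive powers of the $a_{ts}$. $\delta=a_{n(n-1)}\cdots a_{21}$. For $V,W\in B_n$, $V\le W$ means $W=P_1VP_2$ with $P_1,P_2$ represented by positive words. An ordered pair $(a,b)$ of band generators is an obstructing pair if, for some integers $n\ge t>s>r>q\ge1$, it is one of: (1) $(a_{tr},a_{sq})$; (2) $(a_{sq},a_{tr})$; (3) $(a_{sr},a_{ts})$; (4) $(a_{ts},a_{tr})$; (5) $(a_{tr},a_{sr})$; (6) $(a_{ts},a_{ts})$ (for cases (4)-(6) only the indices appearing matter). *)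

(* Defs.v *)
From mathcomp Require Import all_boot.
Set Implicit Arguments.
Unset Strict Implicit.
Unset Printing Implicit Defensive.

(* A letter (i, true) is sigma_i, (i, false) is sigma_i^{-1}.             *)
Definition letter := (nat * bool)%type.
Definition bword := seq letter.

Inductive brel (n : nat) : bword -> bword -> Prop :=
| brel_inv1 i : 1 <= i -> i < n -> brel n [:: (i, true); (i, false)] [::]
| brel_inv2 i : 1 <= i -> i < n -> brel n [:: (i, false); (i, true)] [::]
| brel_comm i j : 1 <= i -> j < n -> i.+1 < j ->
    brel n [:: (i, true); (j, true)] [:: (j, true); (i, true)]
| brel_braid i : 1 <= i -> i.+1 < n ->
    brel n [:: (i, true); (i.+1, true); (i, true)]
           [:: (i.+1, true); (i, true); (i.+1, true)].

Inductive beq (n : nat) : bword -> bword -> Prop :=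
| beq_rel u x y v : brel n x y -> beq n (u ++ x ++ v) (u ++ y ++ v)
| beq_refl w : beq n w w
| beq_sym w1 w2 : beq n w1 w2 -> beq n w2 w1
| beq_trans w1 w2 w3 : beq n w1 w2 -> beq n w2 w3 -> beq n w1 w3.

(* A band generator a_{ts} is represented by the pair (t, s). *)
Definition band := (nat * nat)%type.

Definition is_band (n : nat) (a : band) : Prop := 1 <= a.2 /\ a.2 < a.1 /\ a.1 <= n.

(* a_{ts} = (sigma_{t-1} ... sigma_{s+1}) sigma_s (sigma_{s+1}^{-1} ... sigma_{t-1}^{-1}) *)
Definition band_word (a : band) : bword :=
  let t := a.1 in let s := a.2 in
  [seq (i, true) | i <- rev (iota s.+1 (t - s.+1))] ++ [:: (s, true)] ++
  [seq (i, false) | i <- iota s.+1 (t - s.+1)].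

Definition pword := seq band.

Definition is_pword (n : nat) (P : pword) : Prop := forall a, a \in P -> is_band n a.

Definition pw_braid (P : pword) : bword := flatten [seq band_word a | a <- P].

Definition delta_pw (n : nat) : pword := [seq (k.+1, k) | k <- rev (iota 1 n.-1)].

Definition ble (n : nat) (V W : bword) : Prop :=
  exists P1 P2 : pword, is_pword n P1 /\ is_pword n P2 /\
    beq n W (pw_braid P1 ++ V ++ pw_braid P2).

Definition obstructing (n : nat) (a b : band) : Prop :=
  (exists t s r q, [/\ n >= t, t > s, s > r, r > q & q >= 1] /\
     ((a, b) = ((t, r), (s, q)) \/ (a, b) = ((s, q), (t, r))
      \/ (a, b) = ((s, r), (t, s))))
  \/ (exists t s r, [/\ n >= t, t > s, s > r & r >= 1] /\
     ((a, b) = ((t, s), (t, r)) \/ (a, b) = ((t, r), (s, r))))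
  \/ (exists t s, [/\ n >= t, t > s & s >= 1] /\ (a, b) = ((t, s), (t, s))).

(* Main.v *)
Require Import Defs.
From mathcomp Require Import all_boot fingroup perm zify.
Set Implicit Arguments. Unset Strict Implicit. Unset Printing Implicit Defensive.
Import GroupScope.

Section P.
Variable n : nat.
Notation T := ('I_n.+1).

Definition sig (l : letter) : {perm T} := tperm (inord l.1) (inord l.1.+1).
Definition permw (w : bword) : {perm T} := foldr (fun l p => sig l * p) 1 w.

Lemma permw_cat u v : permw (u ++ v) = permw u * permw v.
Proof. elim: u => [|l u IH] /=; first by rewrite mul1g. by rewrite IH mulgA. Qed.

Lemma inord_eq x y : x <= n -> y <= n -> (inord x == inord y :> T) = (x == y).
Proof.
move=> hx hy; apply/eqP/eqP => [/(congr1 (@nat_of_ord _))|->//].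
by rewrite !inordK.
Qed.

Lemma tperm_comm (x y z w : T) : x != z -> x != w -> y != z -> y != w ->
  tperm x y * tperm z w = tperm z w * tperm x y.
Proof.
move=> h1 h2 h3 h4; rewrite [RHS]conjgC tpermJ tpermD // tpermD //.
Qed.

Lemma brel_perm x y : brel n x y -> permw x = permw y.
Proof.
case=> [i h1 h2|i h1 h2|i j h1 h2 h3|i h1 h2] /=.
- by rewrite mulg1 tperm2.
- by rewrite mulg1 tperm2.
- rewrite !mulg1 /sig /= tperm_comm //; rewrite inord_eq; lia.
- rewrite !mulg1 !mulgA.
  have E : forall (l : letter) b, sig l * b * sig l = b ^ sig l.
    by move=> l b; rewrite conjgE /sig tpermV mulgA.
  rewrite !E /sig /= !tpermJ.
  rewrite tpermR tpermL (tpermD (x:=inord i)) ?(tpermD (z := inord i)) //;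
    rewrite inord_eq; lia.
Qed.

Lemma beq_perm w1 w2 : beq n w1 w2 -> permw w1 = permw w2.
Proof.
elim=> [u x y v /brel_perm E|w|w1' w2' _ ->|w1' w2' w3' _ -> _ ->] //.
by rewrite !permw_cat E.
Qed.

Definition bperm (a : band) : {perm T} := tperm (inord a.2) (inord a.1).

Lemma band_word_S t s : s < t ->
  band_word (t.+1, s) = (t, true) :: band_word (t, s) ++ [:: (t, false)].
Proof.
move=> h; rewrite /band_word /=.
have -> : t.+1 - s.+1 = (t - s.+1).+1 by lia.
rewrite -[(t - s.+1).+1]addn1 iotaD rev_cat /= map_cat /=.
have -> : s.+1 + (t - s.+1) = t by lia.
by rewrite -catA.
Qed.

Lemma permw_band k s : 1 <= s -> s + k.+1 <= n ->
  permw (band_word (s + k.+1, s)) = bperm (s + k.+1, s).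
Proof.
move=> h1; elim: k => [|k IH] h2.
  by rewrite addn1 /band_word /= subnn /= mulg1.
rewrite addnS band_word_S; last lia.
rewrite /= permw_cat IH; last lia.
rewrite /= mulg1 mulgA.
have -> : sig (s + k.+1, true) * bperm (s + k.+1, s) * sig (s + k.+1, false)
   = bperm (s + k.+1, s) ^ sig (s + k.+1, true) by rewrite conjgE /sig tpermV mulgA.
rewrite /bperm /sig /= tpermJ tpermL tpermD //; rewrite inord_eq; lia.
Qed.

Lemma permw_band' a : is_band n a -> permw (band_word a) = bperm a.
Proof.
case: a => t s [/= h1 [h2 h3]].
have -> : t = s + (t - s.+1).+1 by lia.
apply: permw_band; lia.
Qed.

Definition pprod (P : pword) : {perm T} := foldr (fun a p => bperm a * p) 1 P.

Lemma pprod_cat P Q : pprod (P ++ Q) = pprod P * pprod Q.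
Proof. elim: P => [|l u IH] /=; first by rewrite mul1g. by rewrite IH mulgA. Qed.

Lemma permw_pw P : is_pword n P -> permw (pw_braid P) = pprod P.
Proof.
elim: P => [|a P IH] hP //=.
rewrite permw_cat permw_band' ?IH //.
- by move=> b hb; apply: hP; rewrite inE hb orbT.
- by apply: hP; rewrite inE eqxx.
Qed.

Lemma hurwitz (g : {perm T}) L : exists L', size L' = size L /\ g * pprod L = pprod L' * g.
Proof.
elim: L g => [|a L IH] g /=; first by exists [::]; rewrite mulg1 mul1g.
have [L' [h1 h2]] := IH g.
exists ((val (g^-1 (inord a.2)), val (g^-1 (inord a.1))) :: L'); split; first by rewrite /= h1.
rewrite /= -mulgA -h2 !mulgA; congr (_ * _).
by rewrite /bperm /= !inord_val -tpermJ conjgE invgK mulgA mulgKV tpermC.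
Qed.

Lemma porbits1 : #|porbits (1 : {perm T})| = n.+1.
Proof.
rewrite /porbits card_in_imset ?card_ord // => x y _ _ E.
have : x \in porbit 1 y by rewrite -E porbit_id.
by case/porbitP => i; rewrite expg1n perm1.
Qed.

Lemma porbits_pprod L : n.+1 <= #|porbits (pprod L)| + size L.
Proof.
elim: L => [|a L IH] /=; first by rewrite porbits1 addn0.
have := porbits_mul_tperm (pprod L) (inord a.2) (inord a.1).
case: (boolP (inord a.2 \in porbit (pprod L) (inord a.1))) => h /=.
  rewrite addn0 => E; rewrite /bperm E; move: IH.
  set X := #|porbits (pprod L)|; set b := nat_of_bool _; lia.
have : (inord a.2 : T) != inord a.1.
  by apply/eqP => E; move: h; rewrite E porbit_id.
move=> -> /=; rewrite /bperm => E; move: IH E.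
set X := #|porbits (pprod L)|; set Y := #|porbits _|; rewrite -addnn; lia.
Qed.
End P.

Definition cnt (b : bool) (w : bword) := count (fun l : letter => l.2 == b) w.

Lemma beq_cnt n w1 w2 : beq n w1 w2 -> cnt true w1 + cnt false w2 = cnt true w2 + cnt false w1.
Proof.
elim=> [u x y v hr|w|w1' w2' _ IH|w1' w2' w3' _ IH1 _ IH2]; try lia.
rewrite /cnt !count_cat.
case: hr => * /=; lia.
Qed.

Lemma cnt_map b b' L : cnt b' [seq (i, b) | i <- L] = if b == b' then size L else 0.
Proof.
elim: L => [|x L IH]; first by case: b; case: b'.
move: IH; rewrite /cnt /=; case: b; case: b' => /= ->; lia.
Qed.

Lemma cnt_band a : cnt true (band_word a) = (cnt false (band_word a)).+1.
Proof.
rewrite /band_word /cnt !count_cat -!/(cnt _ _) !cnt_map /= size_rev; lia.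
Qed.

Lemma cnt_pw P : cnt true (pw_braid P) = cnt false (pw_braid P) + size P.
Proof.
elim: P => [|a P IH] //=.
rewrite /pw_braid /= -/(pw_braid P) /cnt count_cat -!/(cnt _ _) IH cnt_band /cnt count_cat -!/(cnt _ _); lia.
Qed.

Section Q.
Variable n : nat.
Notation T := ('I_n.+1).

Definition pn (p : {perm T}) x := nat_of_ord (p (inord x)).

Lemma pnM p q x : pn (p * q) x = pn q (pn p x).
Proof. by rewrite /pn permM inord_val. Qed.

Definition tp (u v y : nat) : nat := if y == u then v else if y == v then u else y.

Lemma pn_le p x : pn p x <= n.
Proof. by rewrite /pn -ltnS ltn_ord. Qed.

Lemma pn_tperm u v y : y <= n -> u <= n -> v <= n ->
  pn (tperm (inord u) (inord v)) y = tp u v y.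
Proof.
move=> hy hu hv; rewrite /pn /tp.
case: tpermP => [/eqP|/eqP|h1 h2]; rewrite ?inord_eq //.
- by move=> /eqP ->; rewrite eqxx inordK.
- move=> /eqP ->; rewrite eqxx inordK //; case: eqP => // ->; by rewrite inordK.
- move/eqP: h1; move/eqP: h2; rewrite !inord_eq // => h2 h1.
  by rewrite inordK // (negbTE h1) (negbTE h2).
Qed.

Definition Dm m := pprod n [seq (k.+1, k) | k <- rev (iota 1 m)].

Lemma pn_D m x : m < n -> x <= n ->
  pn (Dm m) x = if (0 < x) && (x <= m) then x.+1 else if x == m.+1 then 1%N else x.
Proof.
elim: m x => [|m IH] x hm hx.
  by rewrite /Dm /= /pn perm1 inordK //; repeat case: ifP; move=> *; lia.
rewrite /Dm -[m.+1]addn1 iotaD rev_cat /= -/(Dm m) pnM /bperm /= pn_tperm; try lia.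
rewrite IH; last first.
- rewrite /tp; repeat case: ifP; move=> *; lia.
- lia.
rewrite /tp; repeat case: ifP; move=> *; lia.
Qed.

Definition O (p : {perm T}) x := porbit p (inord x).

Lemma O_step p x : O p (pn p x) = O p x.
Proof. by rewrite /O /pn inord_val; have := porbit_perm p 1 (inord x); rewrite expg1. Qed.

Lemma O_arc p lo hi : (forall y, lo <= y < hi -> pn p y = y.+1) ->
  forall x, lo <= x <= hi -> O p x = O p lo.
Proof.
move=> H; elim=> [|x IH] hx; first by have -> : lo = 0 by lia.
case: (ltnP lo x.+1) => h; last by have -> : lo = x.+1 by lia.
rewrite -(H x); last lia.
rewrite O_step IH //; lia.
Qed.

Lemma porbits_le2 p : (forall x, 1 <= x <= n -> O p x = O p 1) -> #|porbits p| <= 2.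
Proof.
move=> H.
apply: (@leq_trans #|[set porbit p ord0; porbit p (inord 1)]|); last first.
  by rewrite cards2; case: eqP.
apply: subset_leq_card; apply/subsetP => X /imsetP [y _ ->].
rewrite !inE; case: (posnP y) => hy.
  by apply/orP; left; apply/eqP; congr porbit; apply: val_inj.
apply/orP; right; apply/eqP.
have := H y; rewrite /O inord_val => ->; last by rewrite hy /= -ltnS ltn_ord.
by [].
Qed.

Ltac solve_if := rewrite /tp; repeat case: ifP; move=> *; lia.

Lemma orb3 p r s t : 1 <= r -> r < s -> s < t -> t <= n ->
  (forall x, 1 <= x < n -> x.+1 != r -> x.+1 != s -> x.+1 != t -> pn p x = x.+1) ->
  (1 < r -> pn p n = 1%N) ->
  pn p s.-1 = t -> pn p t.-1 = r -> pn p (if r == 1%N then n else r.-1) = s ->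
  forall x, 1 <= x <= n -> O p x = O p 1.
Proof.
move=> h1 h2 h3 h4 H Hn Hs Ht Hr.
have A := @O_arc p r s.-1 ltac:(move=> y hy; apply: H; lia).
have B := @O_arc p s t.-1 ltac:(move=> y hy; apply: H; lia).
have C := @O_arc p t n ltac:(move=> y hy; apply: H; lia).
have E1 : O p s = O p r by rewrite -Ht O_step (B t.-1) //; lia.
have E2 : O p t = O p r by rewrite -Hs O_step A //; lia.
have E3 : O p 1 = O p r.
  case: (ltnP 1 r) => hr.
  - have D := @O_arc p 1 r.-1 ltac:(move=> y hy; apply: H; lia).
    rewrite -(D r.-1); last lia.
    move: Hr; have -> : (r == 1%N) = false by lia.
    by move=> Hr; rewrite -E1 -Hr O_step.
  - by have -> : r = 1%N by lia.
move=> x hx; rewrite E3.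
case: (ltnP x r) => hxr.
  have D := @O_arc p 1 r.-1 ltac:(move=> y hy; apply: H; lia).
  rewrite D; last lia. by rewrite E3.
case: (ltnP x s) => hxs; first by rewrite A //; lia.
case: (ltnP x t) => hxt; first by rewrite B ?E1 //; lia.
by rewrite C ?E2 //; lia.
Qed.

Lemma orb4 p q r s t : 1 <= q -> q < r -> r < s -> s < t -> t <= n ->
  (forall x, 1 <= x < n -> x.+1 != q -> x.+1 != r -> x.+1 != s -> x.+1 != t -> pn p x = x.+1) ->
  (1 < q -> pn p n = 1%N) ->
  pn p (if q == 1%N then n else q.-1) = s -> pn p r.-1 = t -> pn p s.-1 = q -> pn p t.-1 = r ->
  forall x, 1 <= x <= n -> O p x = O p 1.
Proof.
move=> h0 h1 h2 h3 h4 H Hn Hq Hr Hs Ht.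
have A := @O_arc p q r.-1 ltac:(move=> y hy; apply: H; lia).
have A' := @O_arc p r s.-1 ltac:(move=> y hy; apply: H; lia).
have B := @O_arc p s t.-1 ltac:(move=> y hy; apply: H; lia).
have C := @O_arc p t n ltac:(move=> y hy; apply: H; lia).
have E0 : O p t = O p q by rewrite -Hr O_step A //; lia.
have E1 : O p r = O p q by rewrite -Hs O_step A' //; lia.
have E2 : O p s = O p q by rewrite -E1 -Ht O_step B //; lia.
have E3 : O p 1 = O p q.
  case: (ltnP 1 q) => hq.
  - have D := @O_arc p 1 q.-1 ltac:(move=> y hy; apply: H; lia).
    rewrite -(D q.-1); last lia.
    move: Hq; have -> : (q == 1%N) = false by lia.
    by move=> Hq; rewrite -E2 -Hq O_step.
  - by have -> : q = 1%N by lia.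
move=> x hx; rewrite E3.
case: (ltnP x q) => hxq.
  have D := @O_arc p 1 q.-1 ltac:(move=> y hy; apply: H; lia).
  rewrite D; last lia. by rewrite E3.
case: (ltnP x r) => hxr; first by rewrite A //; lia.
case: (ltnP x s) => hxs; first by rewrite A' ?E1 //; lia.
case: (ltnP x t) => hxt; first by rewrite B ?E2 //; lia.
by rewrite C ?E0 //; lia.
Qed.

Definition cpn x := if (0 < x) && (x <= n.-1) then x.+1 else if x == n.-1.+1 then 1%N else x.

Lemma pn_main (a b : band) (x : nat) : is_band n a -> is_band n b -> x <= n ->
  pn (Dm n.-1 * bperm n b * bperm n a) x = tp a.2 a.1 (tp b.2 b.1 (cpn x)).
Proof.
move=> [ha1 [ha2 ha3]] [hb1 [hb2 hb3]] hx.
rewrite !pnM pn_D; [|lia|lia].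
rewrite /bperm pn_tperm; [|exact: pn_le|lia|lia].
rewrite pn_tperm; [|solve_if|lia|lia].
by [].
Qed.

Ltac solve_all := rewrite /tp /cpn /=; repeat case: ifP; move=> *; lia.
Ltac pm := rewrite pn_main; [solve_all | rewrite /is_band /=; lia | rewrite /is_band /=; lia | lia].

Lemma obst_bound (a b : band) : is_band n a -> is_band n b -> obstructing n a b ->
  #|porbits (Dm n.-1 * bperm n b * bperm n a)| <= 2.
Proof.
move=> ha hb hob; apply: porbits_le2.
case: hob => [[t [s [r [q [[h1 h2 h3 h4 h5] hc]]]]]|[[t [s [r [[h1 h2 h3 h4] hc]]]]|[t [s [[h1 h2 h3] hc]]]]].
- case: hc => [[-> ->]|[[-> ->]|[-> ->]]].
  + apply: (@orb4 _ q r s t); try lia.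
    * move=> x hx *; pm.
    * move=> hq; pm.
    * case: ifP => hq; pm.
    * pm.
    * pm.
    * pm.
  + apply: (@orb4 _ q r s t); try lia.
    * move=> x hx *; pm.
    * move=> hq; pm.
    * case: ifP => hq; pm.
    * pm.
    * pm.
    * pm.
  + apply: (@orb3 _ r s t); try lia.
    * move=> x hx *; pm.
    * move=> hq; pm.
    * pm.
    * pm.
    * case: ifP => hq; pm.
- case: hc => [[-> ->]|[-> ->]].
  + apply: (@orb3 _ r s t); try lia.
    * move=> x hx *; pm.
    * move=> hq; pm.
    * pm.
    * pm.
    * case: ifP => hq; pm.
  + apply: (@orb3 _ r s t); try lia.
    * move=> x hx *; pm.
    * move=> hq; pm.
    * pm.
    * pm.
    * case: ifP => hq; pm.
- case: hc => -> ->; rewrite -mulgA /bperm tperm2 mulg1.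
  have E := @O_arc (Dm n.-1) 1 n ltac:(move=> y hy; rewrite pn_D; [solve_all|lia|lia]).
  by move=> x hx; apply: E.
Qed.
End Q.


Lemma pw_cat P Q : pw_braid (P ++ Q) = pw_braid P ++ pw_braid Q.
Proof. by rewrite /pw_braid map_cat flatten_cat. Qed.

Lemma is_pword_cat n P Q : is_pword n (P ++ Q) <-> is_pword n P /\ is_pword n Q.
Proof.
split.
- by move=> h; split=> x hx; apply: h; rewrite mem_cat hx ?orbT.
- by case=> h1 h2 x; rewrite mem_cat => /orP [] ?; [apply: h1|apply: h2].
Qed.

Lemma is_pword_cons n a P : is_pword n (a :: P) <-> is_band n a /\ is_pword n P.
Proof.
split.
- by move=> h; split; [apply: h; rewrite inE eqxx|move=> x hx; apply: h; rewrite inE hx orbT].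
- case=> h1 h2 x; rewrite inE => /orP [/eqP ->|?] //; exact: h2.
Qed.

Lemma size_from_beq n P Q : beq n (pw_braid P) (pw_braid Q) -> size P = size Q.
Proof. move/beq_cnt; rewrite !cnt_pw; lia. Qed.

Lemma delta_ok n : is_pword n (delta_pw n).
Proof.
move=> x /mapP [k]; rewrite mem_rev mem_iota => hk ->; rewrite /is_band /=; lia.
Qed.

Theorem lemma3p3 (n : nat) (A : pword) :
  is_pword n A ->
  ble n [::] (pw_braid A) ->
  ble n (pw_braid A) (pw_braid (delta_pw n)) ->
  ~ (exists (B C D : pword) (a b : band),
       [/\ is_pword n B, is_pword n C, is_pword n D, is_band n a & is_band n b]
       /\ obstructing n a b
       /\ beq n (pw_braid A) (pw_braid (B ++ a :: C ++ b :: D))).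
Proof.
move=> hA _ [P1 [P2 [hP1 [hP2 hD]]]] [B [C [D [a [b [[hB hC hD' ha hb] [hob hE]]]]]]].
set M := B ++ a :: C ++ b :: D.
have hM : is_pword n M.
  rewrite /M is_pword_cat is_pword_cons is_pword_cat is_pword_cons; tauto.
have hs1 := size_from_beq hE.
have hs2 : size (delta_pw n) = size (P1 ++ A ++ P2).
  by apply: (@size_from_beq n); rewrite !pw_cat.
have hsd : size (delta_pw n) = n.-1 by rewrite size_map size_rev size_iota.
have hdel := @delta_ok n.
have hp1 := beq_perm hE.
have hp2 := beq_perm hD.
rewrite !permw_cat !permw_pw // ?delta_ok // in hp2.
rewrite !permw_pw // in hp1.
rewrite hp1 /M !pprod_cat /= in hp2.
have [C1 [hC1 eC1]] := hurwitz (bperm n a) C.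
have [Y1 [hY1 eY1]] := hurwitz (bperm n b) (D ++ P2).
have [Y2 [hY2 eY2]] := hurwitz (bperm n a) Y1.
have e : bperm n a * pprod n C * bperm n b * (pprod n D * pprod n P2)
      = pprod n C1 * pprod n Y2 * bperm n a * bperm n b.
  rewrite -(mulgA _ (bperm n b)) -pprod_cat eY1 eC1.
  rewrite -!mulgA; congr (_ * _); rewrite !mulgA eY2; by [].
have key : Dm n n.-1 * bperm n b * bperm n a = pprod n (P1 ++ B ++ C1 ++ Y2).
  rewrite /Dm -/(delta_pw n) hp2 !pprod_cat /=.
  have -> : pprod n P1 * (pprod n B * (bperm n a * (pprod n C * (bperm n b * pprod n D)))
     * pprod n P2) * bperm n b * bperm n a = pprod n P1 * pprod n B * (bperm n a * pprod n C * bperm n b * (pprod n D * pprod n P2)) * bperm n b * bperm n a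
     by rewrite !mulgA.
  rewrite e /bperm !mulgA -(mulgA _ (tperm (inord b.2) (inord b.1)) (tperm (inord b.2) (inord b.1))) tperm2 mulg1.
  by rewrite -(mulgA _ (tperm (inord a.2) (inord a.1)) (tperm (inord a.2) (inord a.1))) tperm2 mulg1.
have := porbits_pprod n (P1 ++ B ++ C1 ++ Y2).
rewrite -key.
have := obst_bound ha hb hob.
set X := #|porbits _|.
rewrite !size_cat hC1 hY2 hY1 size_cat.
move: hs1 hs2 hsd; rewrite !size_cat /= size_cat /=; lia.
Qed.
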